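(* For any $k\in\mathbb{N}$, there exists a simple connected graph $G$ with at least one edge such that $src(G)-\max(\mathrm{diam}(G),\omega'(G))\geq k$.
   Context: An edge coloring of $G$ is any function $f:E(G)\to\{1,\dots,k\}$ (adjacent edges may share a color). A path is rainbow if its edges receive pairwise distinct colors. $src(G)$ is the minimum number of colors in an edge coloring such that every pair of distinct vertices is joined by a rainbow shortest path. For distinct $u_1,u_2\in V(G)$, an edge $e$ separates $u_1,u_2$ if $e$ lies on every shortest $(u_1,u_2)$-path. The auxiliary graph $H(G)$ has vertex set $E(G)$, with distinct $e_1,e_2$ adjacent iff some pair of distinct vertices is separated by both. $\omega'(G)$ is the clique number of $H(G)$; $\mathrm{diam}(G)$ is the diameter of $G$. *)

(* Defs.v *)
From mathcomp Require Import all_boot.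
Set Implicit Arguments. Unset Strict Implicit. Unset Printing Implicit Defensive.

Section StrongRainbow.
Variables (T : finType) (e : rel T).

Definition gedges : {set {set T}} :=
  [set A : {set T} | [exists x, exists y, e x y && (A == [set x; y])]].

Definition walk_of_len (n : nat) (u v : T) : bool :=
  [exists p : n.-tuple T, path e u p && (last u p == v)].

(* Graph distance (meaningful for connected graphs: then dist u v < #|T|). *)
Definition dist (u v : T) : nat := find (fun n => walk_of_len n u v) (iota 0 #|T|).

Definition diam : nat := \max_(u : T) \max_(v : T) dist u v.

Definition path_edges (u : T) (p : seq T) : seq {set T} :=
  pairmap (fun x y => [set x; y]) u p.

Definition shortest_path (u v : T) (p : seq T) : bool :=
  [&& path e u p, last u p == v & size p == dist u v].

(* f (restricted to the edges) is a strong rainbow colouring with colours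
   from a set of n colours: every pair of distinct vertices is joined by a
   rainbow shortest path. *)
Definition src_coloring (n : nat) (f : {ffun {set T} -> 'I_n}) : bool :=
  [forall u, forall v, (u != v) ==>
     [exists p : (dist u v).-tuple T,
        shortest_path u v p && uniq (map f (path_edges u p))]].

Definition src_colorable (n : nat) : bool :=
  [exists f : {ffun {set T} -> 'I_n}, src_coloring f].

(* Strong rainbow connection number: least n admitting such a colouring
   (for connected graphs, n = #|E(G)| always works, so this is the minimum). *)
Definition src : nat := find src_colorable (iota 0 #|gedges|.+1).

Definition separates (A : {set T}) (u1 u2 : T) : bool :=
  [forall p : (dist u1 u2).-tuple T,
     shortest_path u1 u2 p ==> (A \in path_edges u1 p)].

Definition H_adj (A B : {set T}) : bool :=
  [&& A \in gedges, B \in gedges, A != B &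
      [exists u1, exists u2, (u1 != u2) && separates A u1 u2 && separates B u1 u2]].

Definition H_clique (C : {set {set T}}) : bool :=
  (C \subset gedges) &&
  [forall A in C, forall B in C, (A != B) ==> H_adj A B].

Definition omega' : nat := \max_(C : {set {set T}} | H_clique C) #|C|.

Definition simple_graph : Prop := symmetric e /\ irreflexive e.
Definition gconnected : Prop := forall u v : T, connect e u v.

End StrongRainbow.

(* Main.v *)
Require Import Defs.
From mathcomp Require Import all_boot.
From mathcomp Require Import zify.
Set Implicit Arguments. Unset Strict Implicit. Unset Printing Implicit Defensive.

Lemma find_iota_le (P : pred nat) N d : P d -> d < N -> find P (iota 0 N) <= d.
Proof.
move=> Pd dN; rewrite leqNgt; apply/negP => lt.
have := before_find 0 lt. by rewrite nth_iota // add0n Pd.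
Qed.

Lemma find_iota_ge (P : pred nat) N d : (forall m, m < d -> ~~ P m) -> d <= N ->
  d <= find P (iota 0 N).
Proof.
move=> Hm dN; rewrite leqNgt; apply/negP => lt.
have hs : has P (iota 0 N) by rewrite has_find size_iota; apply: leq_trans lt dN.
have := nth_find 0 hs. rewrite nth_iota ?add0n; last by apply: leq_trans lt dN.
by rewrite (negbTE (Hm _ lt)).
Qed.

Section Gen.
Variables (T : finType) (e : rel T).

Lemma walkP u v (s : seq T) : path e u s -> last u s = v -> walk_of_len e (size s) u v.
Proof. move=> p l; apply/existsP; exists (in_tuple s); by rewrite /= p l eqxx. Qed.

Lemma walk0 u v : walk_of_len e 0 u v -> u = v.
Proof. by case/existsP => -[[|x s] //= _] /eqP. Qed.

Lemma walk1 u v : walk_of_len e 1 u v -> e u v.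
Proof. by case/existsP => -[[|x [|y s]] //= _] /andP[/andP [H _] /eqP <-]. Qed.

Lemma dist_le u v d : walk_of_len e d u v -> d < #|T| -> dist e u v <= d.
Proof. move=> W dN; exact: (@find_iota_le (fun n => walk_of_len e n u v)). Qed.

Lemma dist_eq u v d : walk_of_len e d u v -> d < #|T| ->
  (forall m, m < d -> ~~ walk_of_len e m u v) -> dist e u v = d.
Proof.
move=> W dN Hm; apply/eqP; rewrite eqn_leq dist_le //.
exact: (@find_iota_ge (fun n => walk_of_len e n u v)) (ltnW dN).
Qed.

Lemma dist1 u v : e u v -> u != v -> 1 < #|T| -> dist e u v = 1.
Proof.
move=> euv uv hT; apply: dist_eq => //.
  by have := @walkP u v [:: v]; rewrite /= euv; apply.
by case=> // _; apply/negP => /walk0 /eqP; rewrite (negbTE uv).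
Qed.

Lemma dist2 u v w : u != v -> ~~ e u v -> e u w -> e w v -> 2 < #|T| -> dist e u v = 2.
Proof.
move=> uv nuv euw ewv hT; apply: dist_eq => //.
  by have := @walkP u v [:: w; v]; rewrite /= euw ewv; apply.
case=> [_|[_|//]]; apply/negP.
  by move/walk0/eqP; rewrite (negbTE uv).
by move/walk1; rewrite (negbTE nuv).
Qed.

Lemma sep_use A u1 u2 s : separates e A u1 u2 -> shortest_path e u1 u2 s ->
  A \in path_edges u1 s.
Proof.
move=> /forallP H sp. have sz : size s == dist e u1 u2 by case/and3P: sp.
by have := H (Tuple sz); rewrite /= sp.
Qed.

Lemma col_use n (f : {ffun {set T} -> 'I_n}) u v : src_coloring e f -> u != v ->
  exists s, shortest_path e u v s && uniq (map f (path_edges u s)).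
Proof.
move=> /forallP/(_ u)/forallP/(_ v)/implyP H uv.
by case/existsP: (H uv) => p Hp; exists p.
Qed.

Lemma sep1 A u1 u2 : e u1 u2 -> dist e u1 u2 = 1 -> separates e A u1 u2 ->
  A = [set u1; u2].
Proof.
move=> euv d1 sA.
have sp : shortest_path e u1 u2 [:: u2] by rewrite /shortest_path /= euv eqxx d1.
by have := sep_use sA sp; rewrite /path_edges /= inE => /eqP.
Qed.

Lemma sep2 A u1 u2 w w' : dist e u1 u2 = 2 -> e u1 w -> e w u2 -> e u1 w' -> e w' u2 ->
  w != u1 -> w != w' -> w != u2 -> ~~ separates e A u1 u2.
Proof.
move=> d2 e1 e2 e3 e4 n1 n2 n3; apply/negP => sA.
have sp1 : shortest_path e u1 u2 [:: w; u2] by rewrite /shortest_path /= e1 e2 eqxx d2.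
have sp2 : shortest_path e u1 u2 [:: w'; u2] by rewrite /shortest_path /= e3 e4 eqxx d2.
have wA : w \in A.
  by move: (sep_use sA sp1); rewrite /path_edges /= !inE => /orP[]/eqP->; rewrite !inE eqxx ?orbT.
move: (sep_use sA sp2); rewrite /path_edges /= !inE => /orP[]/eqP AE; move: wA;
  by rewrite AE !inE ?(negbTE n1) ?(negbTE n2) ?(negbTE n3).
Qed.

End Gen.

Section K2.
Variable b : nat.
Hypothesis hb : 1 < b.

Definition VT : finType := (bool + 'I_b)%type.
Definition ke : rel VT := fun u v =>
  match u, v with inl _, inr _ => true | inr _, inl _ => true | _, _ => false end.

Definition i0 : 'I_b := Ordinal (ltnW hb).
Definition i1 : 'I_b := Ordinal hb.

Lemma cardVT : #|VT| = 2 + b.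
Proof. by rewrite card_sum card_bool card_ord. Qed.

Lemma hT1 : 1 < #|VT|. Proof. rewrite cardVT; lia. Qed.
Lemma hT2 : 2 < #|VT|. Proof. rewrite cardVT; lia. Qed.

Lemma ke_simple : simple_graph ke.
Proof. by split; [case=> [a|i] [a'|j] | case]. Qed.

Lemma walk_short (u v : VT) : exists s : seq VT, [&& path ke u s, last u s == v & size s <= 2].
Proof.
case: u v => [a|i] [a'|j].
- by exists [:: (inr i0 : VT); inl a']; rewrite /= eqxx.
- by exists [:: (inr j : VT)]; rewrite /= eqxx.
- by exists [:: (inl a' : VT)]; rewrite /= eqxx.
- by exists [:: (inl false : VT); inr j]; rewrite /= eqxx.
Qed.

Lemma ke_conn : gconnected ke.
Proof.
move=> u v; have [s /and3P [p /eqP l _]] := walk_short u v.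
by apply/connectP; exists s.
Qed.

Lemma diam_le : diam ke <= 2.
Proof.
apply/bigmax_leqP => u _; apply/bigmax_leqP => v _.
have [s /and3P [p /eqP l sz]] := walk_short u v.
exact: leq_trans (dist_le (walkP p l) (leq_ltn_trans sz hT2)) sz.
Qed.

Lemma noHadj A B : H_adj ke A B = false.
Proof.
apply/negP => /and4P [_ _ AB /existsP [u1 /existsP [u2 /andP[/andP[u12 sA] sB]]]].
case: u1 u2 u12 sA sB => [a|i] [a'|j] u12 sA sB.
- have d2 : dist ke (inl a) (inl a') = 2.
    by apply: (@dist2 _ _ _ _ (inr i0)) => //; exact: hT2.
  by move: sA; apply/negP; apply: (@sep2 _ _ _ _ _ (inr i0) (inr i1)).
- have d1 : dist ke (inl a) (inr j) = 1 by apply: dist1 => //; exact: hT1.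
  have eA : A = [set inl a; inr j] by apply: sep1 d1 sA.
  have eB : B = [set inl a; inr j] by apply: sep1 d1 sB.
  move: eB eA.
  by move=> eB eA; move: AB; rewrite eA eB => /eqP; apply.
- have d1 : dist ke (inr i) (inl a') = 1 by apply: dist1 => //; exact: hT1.
  have eA : A = [set inr i; inl a'] by apply: sep1 d1 sA.
  have eB : B = [set inr i; inl a'] by apply: sep1 d1 sB.
  move: eB eA.
  by move=> eB eA; move: AB; rewrite eA eB => /eqP; apply.
- have d2 : dist ke (inr i) (inr j) = 2.
    by apply: (@dist2 _ _ _ _ (inl false)) => //; exact: hT2.
  by move: sA; apply/negP; apply: (@sep2 _ _ _ _ _ (inl false) (inl true)).
Qed.

Lemma omega_le : omega' ke <= 1.
Proof.
apply/bigmax_leqP => C /andP[_ /forallP H]; rewrite leqNgt; apply/negP.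
case/card_gt1P => A [B [AC BC AB]].
move: (H A); rewrite AC /= => /forallP/(_ B); rewrite BC AB /=.
by rewrite noHadj.
Qed.

Lemma no_col n : n * n < b -> src_colorable ke n = false.
Proof.
move=> hn; apply: negbTE; apply/negP; rewrite /src_colorable => /existsP [f Hf].
pose g := fun i : 'I_b => (f [set inl false; inr i], f [set inl true; inr i]).
have inj : injective g.
  move=> i j gij; apply/eqP; apply/negPn/negP => ij.
  have [s /andP [sp uq]] := col_use Hf (u := inr i) (v := inr j) ij.
  case/and3P: sp => pth /eqP lst /eqP sz.
  have d2 : dist ke (inr i) (inr j) = 2.
    by apply: (@dist2 _ _ _ _ (inl false)) => //; exact: hT2.
  rewrite d2 in sz.
  case: s pth lst sz uq => [|w [|v [|? ?]]] //= pth lst _ uq.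
  case: w pth uq => [a|k] //= pth uq.
  rewrite lst in uq.
  case: gij => e1 e2.
  case: a pth uq => _.
    by rewrite (setUC [set inr i]) e2 inE eqxx.
  by rewrite (setUC [set inr i]) e1 inE eqxx.
have := leq_card g inj; rewrite card_prod !card_ord.
by rewrite leqNgt hn.
Qed.

Lemma gedges_ge : b <= #|gedges ke|.
Proof.
have inj : injective (fun i : 'I_b => [set (inl false : VT); inr i]).
  move=> i j H.
  have : (inr i : VT) \in [set (inl false : VT); inr j] by rewrite -H !inE eqxx orbT.
  by rewrite !inE /= => /eqP [].
rewrite -{1}(card_ord b) -(card_imset _ inj).
apply: subset_leq_card; apply/subsetP => A /imsetP [i _ ->].
rewrite inE; apply/existsP; exists (inl false); apply/existsP; exists (inr i).
by rewrite eqxx.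
Qed.

End K2.

Theorem proposition3 : forall k : nat,
  exists (T : finType) (e : rel T),
    [/\ simple_graph e, gconnected e, (exists x y : T, e x y) &
        k <= src e - maxn (diam e) (omega' e)].
Proof.
move=> k.
have hb : 1 < (k.+1 * k.+1).+1 by rewrite ltnS muln_gt0.
exists (VT (k.+1 * k.+1).+1), (ke (b := (k.+1 * k.+1).+1)).
split.
- exact: ke_simple.
- exact: ke_conn.
- by exists (inl false), (inr (i0 hb)).
have hs : k.+2 <= src (ke (b := (k.+1 * k.+1).+1)).
  apply: (@find_iota_ge (src_colorable _)).
    move=> m hm; rewrite no_col //; rewrite ltnS; apply: leq_mul; lia.
  have := gedges_ge (k.+1 * k.+1).+1; rewrite !ltnS => H.
  apply: leq_trans H; nia.
have := diam_le hb; have := omega_le hb; lia.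
Qed.
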